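(* Let $(X,e,\mu)$ be an $\mathrm{NP}_2$-digital H-space with $X$ $\mathrm{NP}_2$-irreducible. Then $\{e\}$ is a connected component of $X$, so $X=\{e\}\sqcup Z$ with $Z=X\setminus\{e\}$, and there exist an $\mathrm{NP}_2$-continuous map $\tau:Z\times Z\to Z$ and a subset $A\subseteq Z\times Z$ which is a union of connected components of $Z\times Z$ (with the $\mathrm{NP}_2$ adjacency) such that for all $x,y\in X$: $\mu(x,y)=\tau(x,y)$ if $(x,y)\in A$; $\mu(x,y)=x$ if $y=e$; $\mu(x,y)=y$ if $x=e$; and $\mu(x,y)=e$ otherwise. In particular $e$ is a two-sided unit for $\mu$.
   Context: A digital image is a finite set with a reflexive symmetric adjacency relation (a finite reflexive graph); continuous maps send adjacent points to adjacent points. On products, $\mathrm{NP}_2$ declares two tuples adjacent iff coordinates are adjacent in at most 2 positions and equal elsewhere. An $\mathrm{NP}_2$-homotopy from $f$ to $g:X\to Y$ is an $\mathrm{NP}_2$-continuous $H:X\times[0,m]_{\mathbb{Z}}\to Y$ with $H(\cdot,0)=f$, $H(\cdot,m)=g$; write $f\simeq_2 g$. $X$ is $\mathrm{NP}_2$-irreducible if it is not $\mathrm{NP}_2$-homotopy equivalent to a digital image with fewer points. An $\mathrm{NP}_2$-digital H-space is $(X,e,\mu)$ with $\mu:X\times X\to X$ $\mathrm{NP}_2$-continuous, $\mu\circ(\mathrm{id}_X,c_e)\simeq_2\mathrm{id}_X$, $\mu\circ(c_e,\mathrm{id}_X)\simeq_2\mathrm{id}_X$, where $(f,g)(x)=(f(x),g(x))$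 and $c_e$ is constant at $e$ (homotopies need not be pointed). *)

(* Defs.v *)
From mathcomp Require Import all_boot.
Set Implicit Arguments. Unset Strict Implicit. Unset Printing Implicit Defensive.

Record dimage := DImage {
  dcar :> finType;
  dadj : rel dcar;
  dadj_refl : reflexive dadj;
  dadj_sym : symmetric dadj }.

Definition dcontinuous (A B : Type) (adjA : rel A) (adjB : rel B) (f : A -> B) :=
  forall a a', adjA a a' -> adjB (f a) (f a').

(* NP_2 adjacency on a product of two factors: the two tuples are adjacent in
   at most 2 coordinates and equal elsewhere.  With exactly two factors (and
   reflexive adjacencies) this is: each coordinate is equal-or-adjacent,
   i.e. adjacent, in both coordinates. *)
Definition np2 (A B : Type) (adjA : rel A) (adjB : rel B) : rel (A * B) :=
  fun p q => adjA p.1 q.1 && adjB p.2 q.2.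

(* The digital interval [0,m]_Z, represented by 'I_m.+1, with c_1 adjacency. *)
Definition iadj (m : nat) : rel 'I_m.+1 :=
  fun i j => (i <= j.+1) && (j <= i.+1).

Definition np2_homotopic (X Y : dimage) (f g : X -> Y) :=
  exists m : nat, exists H : X * 'I_m.+1 -> Y,
    dcontinuous (np2 (@dadj X) (@iadj m)) (@dadj Y) H /\
    (forall x, H (x, ord0) = f x) /\ (forall x, H (x, ord_max) = g x).

Definition np2_htpy_equiv (X Y : dimage) :=
  exists (f : X -> Y) (g : Y -> X),
    dcontinuous (@dadj X) (@dadj Y) f /\ dcontinuous (@dadj Y) (@dadj X) g /\
    np2_homotopic (fun x => g (f x)) id /\ np2_homotopic (fun y => f (g y)) id.

Definition np2_irreducible (X : dimage) :=
  ~ exists Y : dimage, #|Y| < #|X| /\ np2_htpy_equiv X Y.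

Definition np2_Hspace (X : dimage) (e : X) (mu : X * X -> X) :=
  dcontinuous (np2 (@dadj X) (@dadj X)) (@dadj X) mu /\
  np2_homotopic (fun x => mu (x, e)) id /\
  np2_homotopic (fun x => mu (e, x)) id.

Definition Zt (X : dimage) (e : X) := {x : X | x != e}.
Definition zadj (X : dimage) (e : X) : rel (Zt e) :=
  fun a b => dadj (val a) (val b).

(* Main.v *)
Require Import Defs.
From mathcomp Require Import all_boot zify.

Section Sub.
Variables (X : dimage) (x : X).
Definition Wt := {y : X | y != x}.
Definition wadj : rel Wt := fun a b => dadj (val a) (val b).
Lemma wadj_refl : reflexive wadj. Proof. by move=> a; apply: dadj_refl. Qed.
Lemma wadj_sym : symmetric wadj. Proof. by move=> a b; apply: dadj_sym. Qed.
Definition WI := DImage wadj_refl wadj_sym.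
End Sub.


Lemma close_id (X : dimage) (f : X -> X) : np2_irreducible X ->
  (forall a b, dadj a b -> dadj (f a) b) -> forall x, f x = x.
Proof.
move=> irr cl x; apply/eqP; apply/negPn/negP => fx.
apply: irr; exists (@WI X x); split.
  rewrite /= card_sig.
  have -> : #|[pred y | y != x]| = #|predC1 x| by apply: eq_card.
  have hX : 0 < #|X| by apply/card_gt0P; exists x.
  by rewrite cardC1; move: hX; case: #|X|.
pose r y := if y == x then f x else y.
have rx y : r y != x by rewrite /r; case: ifP => [_|/negbT].
have cr a b : dadj a b -> dadj (r a) b.
  rewrite /r; case: eqP => [->|]; first exact: cl.
  by [].
have cr' a b : dadj a b -> dadj a (r b).
  by move=> ab; rewrite dadj_sym; apply: cr; rewrite dadj_sym.
have rc a b : dadj a b -> dadj (r a) (r b).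
  move=> ab; rewrite /r; case: (eqP (x:=a)) => [ea|na].
    case: (eqP (x:=b)) => [eb|nb]; first by apply: dadj_refl.
    by apply: cl; rewrite -ea.
  case: (eqP (x:=b)) => [eb|nb] //.
  by rewrite dadj_sym; apply: cl; rewrite -eb dadj_sym.
exists (fun y => (exist _ (r y) (rx y) : @WI X x)), (fun y : @WI X x => val y).
split; first by move=> a b ab; exact: rc.
split; first by move=> a b.
split.
  exists 1, (fun p => if p.2 == ord0 then r p.1 else p.1); split.
    move=> [a s] [b t] /andP /= [ab _].
    case: (s == ord0); case: (t == ord0); [exact: rc| exact: cr|exact: cr'|exact: ab].
  by split=> y //=.
exists 0, (fun p => p.1); split; first by move=> [a s] [b t] /andP [].
split=> y /=; apply: val_inj => //=.
by rewrite /r (negbTE (valP y)).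
Qed.

Lemma htpy_id (X : dimage) (f : X -> X) : np2_irreducible X ->
  np2_homotopic f id -> forall x, f x = x.
Proof.
move=> irr [m [H [Hc [H0 Hm]]]].
suff K : forall k, k <= m -> forall x, H (x, inord (m - k)) = x.
  move=> x; rewrite -H0 -{2}(K m (leqnn m) x) subnn; congr H; congr pair.
  by apply: val_inj; rewrite /= inordK.
elim=> [_|k IH km] x.
  by rewrite subn0 -{2}(Hm x); congr H; congr pair; apply: val_inj; rewrite /= inordK.
apply: (@close_id X (fun y => H (y, inord (m - k.+1))) irr) => a b ab.
rewrite -{1}(IH (ltnW km) b); apply: Hc; rewrite /np2 /= ab /iadj.
rewrite !inordK ?ltnS ?leq_subr //; lia.
Qed.

Theorem mainTheorem16 (X : dimage) (e : X) (mu : X * X -> X) :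
  np2_Hspace e mu -> np2_irreducible X ->
  [set y | connect (@dadj X) e y] = [set e] /\
  exists (tau : Zt e * Zt e -> Zt e) (A : {set Zt e * Zt e}),
    dcontinuous (np2 (@zadj X e) (@zadj X e)) (@zadj X e) tau /\
    (forall p q, p \in A -> connect (np2 (@zadj X e) (@zadj X e)) p q -> q \in A) /\
    (forall x y : X,
       (forall (hx : x != e) (hy : y != e),
          ((exist _ x hx, exist _ y hy) \in A ->
             mu (x, y) = val (tau (exist _ x hx, exist _ y hy))) /\
          ((exist _ x hx, exist _ y hy) \notin A -> mu (x, y) = e)) /\
       (y = e -> mu (x, y) = x) /\
       (x = e -> mu (x, y) = y)).
Proof.
move=> [muc [hr hl]] irr.
have mur := @htpy_id X _ irr hr; have mul := @htpy_id X _ irr hl.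
have iso y : dadj e y -> y = e.
  move=> ey.
  have := @close_id X (fun z => mu (y, z)) irr.
  have K : forall a b, dadj a b -> dadj (mu (y, a)) b.
    move=> a b ab; rewrite -{1}(mul b); apply: muc; rewrite /np2 /= ab andbT.
    by rewrite dadj_sym.
  by move=> /(_ K e); rewrite mur.
have iso' y : dadj y e -> y = e by rewrite dadj_sym; exact: iso.
split.
  apply/setP => y; rewrite !inE; apply/idP/eqP; last by move->; exact: connect0.
  move/connectP=> [p pth ->].
  suff K : forall q (x : X), x = e -> path (@dadj X) x q -> last x q = e by exact: K.
  elim=> [|z q IH] x xe //= /andP [xz pz]; subst x.
  by have zx := iso z xz; subst z; exact: IH.
pose m (p : Zt e * Zt e) := mu (val p.1, val p.2).
exists (fun p => insubd p.1 (m p)), [set p | m p != e].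
have step p q : np2 (@zadj X e) (@zadj X e) p q -> (m p == e) = (m q == e).
  move=> /andP [h1 h2].
  have adj : dadj (m p) (m q) by apply: muc; exact/andP.
  apply/eqP/eqP => E; [by apply: iso; rewrite -E | by apply: iso'; rewrite -E].
split.
  move=> p q pq; rewrite /zadj !val_insubd.
  have := step _ _ pq; case: eqP => Ep; case: eqP => Eq //= _.
    by case/andP: pq.
  by case/andP: pq => h1 h2; apply: muc; exact/andP.
split.
  move=> p q pA pq; rewrite -(@closed_connect _ (np2 (@zadj X e) (@zadj X e)) [set p | m p != e] _ p q) //.
  by move=> a b ab; rewrite !inE (step _ _ ab).
move=> x y; split; last by split=> ->.
move=> hx hy; rewrite inE; split => H.
  by rewrite val_insubd H.
by move/negPn/eqP: H.
Qed.
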